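(* Let $d_1,d_2\ge1$ be integers and $s_1,s_2$ real numbers, and define $$h_a(x_1,x_2)=\int_{-1}^1(1+x_1z)^{d_1}(1+x_2z)^{d_2}\big(x_a(x_as_a-1)(1-z^2)+z(1-x_a^2)\big)\,dz,\qquad a=1,2.$$ If $s_1>1$ and $s_2<-1$, then there exist $x_1\in(0,1)$ and $x_2\in(-1,0)$ with $h_1(x_1,x_2)=0=h_2(x_1,x_2)$. *)

(* Defs.v *)
From Stdlib Require Import Reals.
From Coquelicot Require Import Coquelicot.
Open Scope R_scope.

Definition h_integrand (d1 d2 : nat) (x1 x2 xa sa z : R) : R :=
  (1 + x1 * z) ^ d1 * (1 + x2 * z) ^ d2 *
  (xa * (xa * sa - 1) * (1 - z ^ 2) + z * (1 - xa ^ 2)).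

Definition h1 (d1 d2 : nat) (s1 : R) (x1 x2 : R) : R :=
  RInt (fun z => h_integrand d1 d2 x1 x2 x1 s1 z) (-1) 1.

Definition h2 (d1 d2 : nat) (s2 : R) (x1 x2 : R) : R :=
  RInt (fun z => h_integrand d1 d2 x1 x2 x2 s2 z) (-1) 1.

(* Main.v *)
Require Import Defs.
From Stdlib Require Import Reals Lra Lia Arith Bool Classical IndefiniteDescription.
From Coquelicot Require Import Coquelicot.
Open Scope nat_scope.

Inductive clr := C1 | C2 | C3.
Definition door (a b : clr) : bool :=
  match a, b with C1, C2 => true | C2, C1 => true | _, _ => false end.
Definition isc (c a : clr) : bool :=
  match c, a with C1,C1 => true | C2,C2 => true | C3,C3 => true | _,_ => false end.
Definition full (a b c : clr) : bool :=
  (isc C1 a || isc C1 b || isc C1 c) && (isc C2 a || isc C2 b || isc C2 c)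
  && (isc C3 a || isc C3 b || isc C3 c).
Lemma tri a b c : xorb (xorb (door a b) (door b c)) (door a c) = full a b c.
Proof. destruct a, b, c; reflexivity. Qed.

Section Comb.
Variable col : nat -> nat -> clr.
Fixpoint rowpar (j k : nat) : bool :=
  match k with 0 => false | S k => xorb (rowpar j k) (door (col k j) (col (S k) j)) end.
Fixpoint stripfull (j k : nat) : bool :=
  match k with 0 => false | S k => stripfull j k ||
     full (col k j) (col (S k) j) (col (S k) (S j)) ||
     full (col k j) (col k (S j)) (col (S k) (S j)) end.

Lemma strip_inv j k : stripfull j k = false ->
  xorb (xorb (rowpar j k) (rowpar (S j) k))
       (xorb (door (col 0 j) (col 0 (S j))) (door (col k j) (col k (S j)))) = false.
Proof.
  induction k as [|k IH]; simpl.
  - destruct (door (col 0 j) (col 0 (S j))); reflexivity.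
  - intros H. apply orb_false_elim in H as [H H2]. apply orb_false_elim in H as [H H1].
    specialize (IH H).
    rewrite <- tri in H1, H2.
    revert IH H1 H2.
    generalize (rowpar j k) (rowpar (S j) k) (door (col 0 j) (col 0 (S j)))
      (door (col k j) (col k (S j))) (door (col k j) (col (S k) j))
      (door (col (S k) j) (col (S k) (S j))) (door (col k j) (col (S k) (S j)))
      (door (col k (S j)) (col (S k) (S j))).
    intros b1 b2 b3 b4 b5 b6 b7 b8 H0 H1 H2.
    destruct b1, b2, b3, b4, b5, b6, b7, b8; simpl in *; congruence.
Qed.

Variable n : nat.
Hypothesis Hleft : forall j, j <= n -> col 0 j = C1.
Hypothesis Hright : forall j, j <= n -> col n j <> C1.
Hypothesis Hbot : forall i, i <= n -> col i 0 <> C3.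
Hypothesis Htop : forall i, i <= n -> col i n <> C2.

Lemma row0 k : k <= n -> rowpar 0 k = door (col 0 0) (col k 0).
Proof.
  induction k as [|k IH]; intros Hk; simpl.
  - rewrite Hleft by lia. reflexivity.
  - rewrite IH by lia. rewrite Hleft by lia.
    pose proof (Hbot k ltac:(lia)). pose proof (Hbot (S k) Hk).
    destruct (col k 0), (col (S k) 0); simpl; congruence.
Qed.

Lemma rowtop k : k <= n -> rowpar n k = false.
Proof.
  induction k as [|k IH]; intros Hk; simpl; auto.
  rewrite IH by lia.
  pose proof (Htop k ltac:(lia)). pose proof (Htop (S k) Hk).
  destruct (col k n), (col (S k) n); simpl; congruence.
Qed.

Lemma exists_strip : exists j, j < n /\ stripfull j n = true.
Proof.
  destruct (Nat.eq_dec n 0) as [E|Hn].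
  { exfalso. pose proof (Hright 0 ltac:(lia)). rewrite E in H. rewrite Hleft in H by lia. congruence. }
  assert (Hnot : ~ (forall j, j < n -> stripfull j n = false) ).
  { intro Hall.
    assert (forall j, j <= n -> rowpar j n = true).
    { induction j as [|j IH]; intros Hj.
      - rewrite row0 by lia. rewrite Hleft by lia.
        pose proof (Hright 0 ltac:(lia)). pose proof (Hbot n ltac:(lia)).
        destruct (col n 0); simpl; congruence.
      - pose proof (strip_inv j n (Hall j ltac:(lia))).
        rewrite (Hleft j) in H by lia. rewrite (Hleft (S j)) in H by lia.
        pose proof (Hright j ltac:(lia)). pose proof (Hright (S j) ltac:(lia)).
        rewrite IH in H by lia.
        destruct (col n j), (col n (S j)); simpl in H; try congruence;
        destruct (rowpar (S j) n); simpl in H; congruence. }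
    pose proof (H n (le_n n)). rewrite rowtop in H0 by lia. discriminate. }
  destruct (classic (exists j, j < n /\ stripfull j n = true)) as [?|Hc]; auto.
  exfalso; apply Hnot; intros j Hj. destruct (stripfull j n) eqn:E; auto.
  exfalso; apply Hc; eauto.
Qed.
End Comb.
Lemma full_ex a b c : full a b c = true -> forall C,
  a = C \/ b = C \/ c = C.
Proof. destruct a, b, c; simpl; try discriminate; intros _ C; destruct C; auto. Qed.

Lemma strip_ex (col : nat -> nat -> clr) j n : stripfull col j n = true ->
  exists k, k < n /\ (full (col k j) (col (S k) j) (col (S k) (S j)) = true \/
     full (col k j) (col k (S j)) (col (S k) (S j)) = true).
Proof.
  induction n as [|m IH]; simpl; [discriminate|]; intros Hs.
  apply orb_true_elim in Hs as [Hs|Hs]; [apply orb_true_elim in Hs as [Hs|Hs]|].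
  - destruct (IH Hs) as [k [? ?]]; exists k; split; auto.
  - exists m; split; auto.
  - exists m; split; auto.
Qed.

Lemma comb_main (col : nat -> nat -> clr) n :
  (forall j, j <= n -> col 0 j = C1) -> (forall j, j <= n -> col n j <> C1) ->
  (forall i, i <= n -> col i 0 <> C3) -> (forall i, i <= n -> col i n <> C2) ->
  exists i j, i < n /\ j < n /\ forall C, exists a b, a <= 1 /\ b <= 1 /\ col (i + a) (j + b) = C.
Proof.
  intros H1 H2 H3 H4.
  destruct (exists_strip col n H1 H2 H3 H4) as [j [Hj Hs]].
  destruct (strip_ex col j n Hs) as [k [Hk Hf]].
  exists k, j; split; auto; split; auto. intros C.
  assert (E0 : forall m, m + 0 = m) by (intros; lia).
  assert (E1 : forall m, m + 1 = S m) by (intros; lia).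
  destruct Hf as [Hf|Hf]; destruct (full_ex _ _ _ Hf C) as [H|[H|H]].
  - exists 0, 0; rewrite !E0; auto.
  - exists 1, 0; rewrite E0, E1; auto.
  - exists 1, 1; rewrite !E1; auto.
  - exists 0, 0; rewrite !E0; auto.
  - exists 0, 1; rewrite E0, E1; auto.
  - exists 1, 1; rewrite !E1; auto.
Qed.

Open Scope R_scope.


Definition grid (a b : R) (m i : nat) : R := a + (b - a) * INR i / INR m.

Lemma grid_in a b m i : a <= b -> (1 <= m)%nat -> (i <= m)%nat -> a <= grid a b m i <= b.
Proof.
  intros Hab Hm Hi. unfold grid.
  assert (0 < INR m) by (apply lt_0_INR; lia).
  assert (INR i <= INR m) by (apply le_INR; lia).
  assert (0 <= INR i) by apply pos_INR.
  assert (0 <= (b - a) * INR i / INR m).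
  { apply Rmult_le_pos; [nra|]. apply Rlt_le, Rinv_0_lt_compat; lra. }
  assert ((b - a) * INR i / INR m <= b - a).
  { unfold Rdiv. apply (Rmult_le_reg_r (INR m)); auto.
    rewrite Rmult_assoc, Rinv_l by lra. nra. }
  lra.
Qed.

Lemma grid_0 a b m : (1 <= m)%nat -> grid a b m 0 = a.
Proof. intros; unfold grid; simpl; unfold Rdiv; ring. Qed.

Lemma grid_m a b m : (1 <= m)%nat -> grid a b m m = b.
Proof. intros. unfold grid. assert (0 < INR m) by (apply lt_0_INR; lia). field. lra. Qed.

Lemma grid_diff a b m i a1 a2 : a <= b -> (1 <= m)%nat -> (a1 <= 1)%nat -> (a2 <= 1)%nat ->
  Rabs (grid a b m (i + a1) - grid a b m (i + a2)) <= (b - a) / INR m.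
Proof.
  intros Hab Hm H1 H2. unfold grid.
  assert (0 < INR m) by (apply lt_0_INR; lia).
  rewrite !plus_INR.
  replace (a + (b - a) * (INR i + INR a1) / INR m - (a + (b - a) * (INR i + INR a2) / INR m))
    with ((b - a) / INR m * (INR a1 - INR a2)) by (field; lra).
  rewrite Rabs_mult, (Rabs_right ((b-a)/INR m)).
  2: { apply Rle_ge, Rmult_le_pos; [lra|apply Rlt_le, Rinv_0_lt_compat; lra]. }
  assert (0 <= (b - a) / INR m) by (apply Rmult_le_pos; [lra|apply Rlt_le, Rinv_0_lt_compat; lra]).
  assert (Rabs (INR a1 - INR a2) <= 1).
  { destruct a1 as [|[|]]; try lia; destruct a2 as [|[|]]; try lia; simpl;
    unfold Rabs; destruct Rcase_abs; lra. }
  rewrite <- (Rmult_1_r ((b - a) / INR m)) at 2.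
  apply Rmult_le_compat_l; auto.
Qed.
Section PM.
Variables (f g : R -> R -> R) (a b c d L : R).
Hypothesis Hab : a < b.
Hypothesis Hcd : c < d.
Hypothesis HL : 0 <= L.
Definition inbox x y := a <= x <= b /\ c <= y <= d.
Hypothesis Lf : forall x y x' y', inbox x y -> inbox x' y' ->
  Rabs (f x y - f x' y') <= L * (Rabs (x - x') + Rabs (y - y')).
Hypothesis Lg : forall x y x' y', inbox x y -> inbox x' y' ->
  Rabs (g x y - g x' y') <= L * (Rabs (x - x') + Rabs (y - y')).
Hypothesis Hleft : forall y, c <= y <= d -> f a y < 0.
Hypothesis Hright : forall y, c <= y <= d -> 0 <= f b y.
Hypothesis Hbot : forall x, a <= x <= b -> g x c < 0.
Hypothesis Htop : forall x, a <= x <= b -> 0 <= g x d.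

Lemma approx m : (1 <= m)%nat -> exists x y, inbox x y /\
  Rabs (f x y) <= L * ((b - a) / INR m + (d - c) / INR m) /\
  Rabs (g x y) <= L * ((b - a) / INR m + (d - c) / INR m).
Proof.
  intros Hm.
  set (X := grid a b m). set (Y := grid c d m).
  set (col := fun i j => if Rlt_dec (f (X i) (Y j)) 0 then C1 else
                         if Rlt_dec (g (X i) (Y j)) 0 then C2 else C3).
  assert (HX : forall i, (i <= m)%nat -> a <= X i <= b) by (intros; apply grid_in; auto; lra).
  assert (HY : forall i, (i <= m)%nat -> c <= Y i <= d) by (intros; apply grid_in; auto; lra).
  destruct (comb_main col m) as [i [j [Hi [Hj Hc]]]].
  - intros j Hj. unfold col. unfold X. rewrite grid_0 by auto.
    destruct Rlt_dec as [?|nn]; auto. exfalso; apply nn, Hleft, HY; auto.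
  - intros j Hj. unfold col. unfold X. rewrite grid_m by auto.
    destruct Rlt_dec as [r|?]. { pose proof (Hright (Y j) (HY j Hj)). lra. }
    destruct Rlt_dec; discriminate.
  - intros i Hi. unfold col, Y. rewrite (grid_0 c d m) by auto.
    destruct Rlt_dec; [discriminate|]. destruct Rlt_dec as [?|nn]; [discriminate|].
    exfalso; apply nn, Hbot, HX; auto.
  - intros i Hi. unfold col, Y. rewrite (grid_m c d m) by auto.
    destruct Rlt_dec; [discriminate|]. destruct Rlt_dec as [r|?]; [|discriminate].
    pose proof (Htop (X i) (HX i Hi)). lra.
  - destruct (Hc C1) as [a1 [b1 [Ha1 [Hb1 E1]]]].
    destruct (Hc C2) as [a2 [b2 [Ha2 [Hb2 E2]]]].
    destruct (Hc C3) as [a3 [b3 [Ha3 [Hb3 E3]]]].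
    unfold col in E1, E2, E3.
    assert (B1 : inbox (X ((i + a1)%nat)) (Y ((j + b1)%nat))) by (split; [apply HX|apply HY]; lia).
    assert (B2 : inbox (X ((i + a2)%nat)) (Y ((j + b2)%nat))) by (split; [apply HX|apply HY]; lia).
    assert (B3 : inbox (X ((i + a3)%nat)) (Y ((j + b3)%nat))) by (split; [apply HX|apply HY]; lia).
    exists (X ((i + a2)%nat)), (Y ((j + b2)%nat)). split; auto.
    destruct (Rlt_dec (f (X ((i + a1)%nat)) (Y ((j + b1)%nat))) 0) as [F1|F1]; [|destruct Rlt_dec in E1; discriminate].
    destruct (Rlt_dec (f (X ((i + a2)%nat)) (Y ((j + b2)%nat))) 0) as [F2|F2]; [discriminate|].
    destruct (Rlt_dec (g (X ((i + a2)%nat)) (Y ((j + b2)%nat))) 0) as [G2|G2]; [|discriminate].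
    destruct (Rlt_dec (f (X ((i + a3)%nat)) (Y ((j + b3)%nat))) 0) as [F3|F3]; [discriminate|].
    destruct (Rlt_dec (g (X ((i + a3)%nat)) (Y ((j + b3)%nat))) 0) as [G3|G3]; [discriminate|].
    assert (D1 : Rabs (X ((i + a2)%nat) - X ((i + a1)%nat)) <= (b - a) / INR m) by (apply grid_diff; auto; lra).
    assert (D2 : Rabs (Y ((j + b2)%nat) - Y ((j + b1)%nat)) <= (d - c) / INR m) by (apply grid_diff; auto; lra).
    assert (D3 : Rabs (X ((i + a2)%nat) - X ((i + a3)%nat)) <= (b - a) / INR m) by (apply grid_diff; auto; lra).
    assert (D4 : Rabs (Y ((j + b2)%nat) - Y ((j + b3)%nat)) <= (d - c) / INR m) by (apply grid_diff; auto; lra).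
    pose proof (Lf _ _ _ _ B2 B1). pose proof (Lg _ _ _ _ B2 B3).
    assert (L * (Rabs (X ((i + a2)%nat) - X ((i + a1)%nat)) + Rabs (Y ((j + b2)%nat) - Y ((j + b1)%nat)))
       <= L * ((b - a) / INR m + (d - c) / INR m)) by (apply Rmult_le_compat_l; lra).
    assert (L * (Rabs (X ((i + a2)%nat) - X ((i + a3)%nat)) + Rabs (Y ((j + b2)%nat) - Y ((j + b3)%nat)))
       <= L * ((b - a) / INR m + (d - c) / INR m)) by (apply Rmult_le_compat_l; lra).
    set (K := L * ((b - a) / INR m + (d - c) / INR m)) in *.
    set (u := f (X ((i + a2)%nat)) (Y ((j + b2)%nat))) in *.
    set (v := g (X ((i + a2)%nat)) (Y ((j + b2)%nat))) in *.
    set (u1 := f (X ((i + a1)%nat)) (Y ((j + b1)%nat))) in *.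
    set (v3 := g (X ((i + a3)%nat)) (Y ((j + b3)%nat))) in *.
    assert (Rabs (u - u1) <= K) by lra. assert (Rabs (v - v3) <= K) by lra.
    revert H3 H4. unfold Rabs; repeat destruct Rcase_abs; intros; split; lra.
Qed.
End PM.
Section PMZ.
Variables (f g : R -> R -> R) (a b c d L : R).
Hypothesis Hab : a < b.
Hypothesis Hcd : c < d.
Hypothesis HL : 0 <= L.
Hypothesis Lf : forall x y x' y', inbox a b c d x y -> inbox a b c d x' y' ->
  Rabs (f x y - f x' y') <= L * (Rabs (x - x') + Rabs (y - y')).
Hypothesis Lg : forall x y x' y', inbox a b c d x y -> inbox a b c d x' y' ->
  Rabs (g x y - g x' y') <= L * (Rabs (x - x') + Rabs (y - y')).
Hypothesis Hleft : forall y, c <= y <= d -> f a y < 0.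
Hypothesis Hright : forall y, c <= y <= d -> 0 <= f b y.
Hypothesis Hbot : forall x, a <= x <= b -> g x c < 0.
Hypothesis Htop : forall x, a <= x <= b -> 0 <= g x d.

Lemma inv_S_le N p : (0 < N)%nat -> (N <= p)%nat -> / INR (S p) <= / INR N.
Proof.
  intros. apply Rinv_le_contravar. apply lt_0_INR; lia. apply le_INR; lia.
Qed.

Lemma adh_in (w : nat -> R) l lo hi : (forall n, lo <= w n <= hi) -> ValAdh w l -> lo <= l <= hi.
Proof.
  intros Hw Hv. split; apply Rnot_lt_le; intro Hlt.
  - assert (Hp : 0 < lo - l) by lra.
    destruct (Hv (disc l (mkposreal _ Hp)) 0%nat) as [p [_ Hd]].
    { exists (mkposreal _ Hp). intros y Hy; exact Hy. }
    unfold disc in Hd; simpl in Hd. specialize (Hw p).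
    revert Hd; unfold Rabs; destruct Rcase_abs; intros; lra.
  - assert (Hp : 0 < l - hi) by lra.
    destruct (Hv (disc l (mkposreal _ Hp)) 0%nat) as [p [_ Hd]].
    { exists (mkposreal _ Hp). intros y Hy; exact Hy. }
    unfold disc in Hd; simpl in Hd. specialize (Hw p).
    revert Hd; unfold Rabs; destruct Rcase_abs; intros; lra.
Qed.

Lemma small_zero (t M : R) : 0 <= M -> (forall e, 0 < e -> Rabs t <= M * e) -> t = 0.
Proof.
  intros HM H. destruct (Req_dec t 0) as [?|Hn]; auto. exfalso.
  assert (0 < Rabs t) by (apply Rabs_pos_lt; auto).
  specialize (H (Rabs t / (2 * (M + 1)))).
  assert (0 < Rabs t / (2 * (M + 1))) by (apply Rdiv_lt_0_compat; lra).
  specialize (H H1).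
  assert (M * (Rabs t / (2 * (M + 1))) < Rabs t).
  { unfold Rdiv. rewrite <- Rmult_assoc.
    apply (Rmult_lt_reg_r (2 * (M + 1))); [lra|].
    rewrite Rmult_assoc, Rinv_l by lra. nra. }
  lra.
Qed.

Theorem PM_zero : exists x y, inbox a b c d x y /\ f x y = 0 /\ g x y = 0.
Proof.
  assert (Hap : forall n, exists p : R * R, inbox a b c d (fst p) (snd p) /\
    Rabs (f (fst p) (snd p)) <= L * ((b - a) / INR (S n) + (d - c) / INR (S n)) /\
    Rabs (g (fst p) (snd p)) <= L * ((b - a) / INR (S n) + (d - c) / INR (S n))).
  { intros n. destruct (approx f g a b c d L Hab Hcd HL Lf Lg Hleft Hright Hbot Htop (S n))
      as [x [y H]]; [lia|]. exists (x, y); exact H. }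
  set (P := fun n => proj1_sig (constructive_indefinite_description _ (Hap n))).
  assert (HP : forall n, inbox a b c d (fst (P n)) (snd (P n)) /\
    Rabs (f (fst (P n)) (snd (P n))) <= L * ((b - a) / INR (S n) + (d - c) / INR (S n)) /\
    Rabs (g (fst (P n)) (snd (P n))) <= L * ((b - a) / INR (S n) + (d - c) / INR (S n))).
  { intros n. unfold P. destruct constructive_indefinite_description; simpl; auto. }
  set (u := fun n => fst (P n)). set (v := fun n => snd (P n)).
  destruct (Bolzano_Weierstrass u (fun t => a <= t <= b) (compact_P3 a b)) as [l1 Hl1].
  { intros n. apply (HP n). }
  assert (Hphi : forall k, exists p, (k <= p)%nat /\ Rabs (u p - l1) < / INR (S k)).
  { intros k. assert (Hp : 0 < / INR (S k)) by (apply Rinv_0_lt_compat, lt_0_INR; lia).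
    destruct (Hl1 (disc l1 (mkposreal _ Hp)) k) as [p [Hp1 Hp2]].
    { exists (mkposreal _ Hp). intros y Hy; exact Hy. }
    exists p; split; auto. }
  set (phi := fun k => proj1_sig (constructive_indefinite_description _ (Hphi k))).
  assert (Hphi' : forall k, (k <= phi k)%nat /\ Rabs (u (phi k) - l1) < / INR (S k)).
  { intros k. unfold phi. destruct constructive_indefinite_description; simpl; auto. }
  destruct (Bolzano_Weierstrass (fun k => v (phi k)) (fun t => c <= t <= d) (compact_P3 c d)) as [l2 Hl2].
  { intros n. apply (HP (phi n)). }
  assert (B1 : a <= l1 <= b) by (apply (adh_in u); auto; intros n; apply (HP n)).
  assert (B2 : c <= l2 <= d) by (apply (adh_in (fun k => v (phi k))); auto; intros n; apply (HP (phi n))).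
  assert (Key : forall e, 0 < e -> exists p, inbox a b c d (u p) (v p) /\
     Rabs (u p - l1) < e /\ Rabs (v p - l2) < e /\
     Rabs (f (u p) (v p)) <= L * ((b - a) + (d - c)) * e /\
     Rabs (g (u p) (v p)) <= L * ((b - a) + (d - c)) * e).
  { intros e He. destruct (archimed_cor1 e He) as [N [HN1 HN2]].
    destruct (Hl2 (disc l2 (mkposreal _ He)) N) as [k [Hk1 Hk2]].
    { exists (mkposreal _ He). intros y Hy; exact Hy. }
    unfold disc in Hk2; simpl in Hk2.
    destruct (Hphi' k) as [Hk3 Hk4]. destruct (HP (phi k)) as [Hb [Hf Hg]].
    exists (phi k). split; auto.
    assert (I1 : / INR (S k) <= / INR N) by (apply inv_S_le; lia).
    assert (I2 : / INR (S (phi k)) <= / INR N) by (apply inv_S_le; lia).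
    assert (I3 : L * ((b - a) / INR (S (phi k)) + (d - c) / INR (S (phi k)))
               <= L * ((b - a) + (d - c)) * e).
    { unfold Rdiv. rewrite Rmult_assoc. apply Rmult_le_compat_l; auto.
      assert (0 < / INR (S (phi k))) by (apply Rinv_0_lt_compat, lt_0_INR; lia).
      nra. }
    repeat split; try lra; unfold u, v; lra. }
  exists l1, l2. split; [split; auto|].
  assert (HK : 0 <= L * ((b - a) + (d - c)) + 2 * L) by nra.
  split; apply (small_zero _ (L * ((b - a) + (d - c)) + 2 * L)); auto; intros e He;
  destruct (Key e He) as [p [Hb [H1 [H2 [H3 H4]]]]].
  - assert (Hl : inbox a b c d l1 l2) by (split; auto).
    pose proof (Lf _ _ _ _ Hl Hb).
    assert (Rabs (l1 - u p) < e) by (rewrite Rabs_minus_sym; auto).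
    assert (Rabs (l2 - v p) < e) by (rewrite Rabs_minus_sym; auto).
    assert (L * (Rabs (l1 - u p) + Rabs (l2 - v p)) <= L * (2 * e)) by (apply Rmult_le_compat_l; lra).
    pose proof (Rabs_triang_inv (f l1 l2) (f (u p) (v p))). nra.
  - assert (Hl : inbox a b c d l1 l2) by (split; auto).
    pose proof (Lg _ _ _ _ Hl Hb).
    assert (Rabs (l1 - u p) < e) by (rewrite Rabs_minus_sym; auto).
    assert (Rabs (l2 - v p) < e) by (rewrite Rabs_minus_sym; auto).
    assert (L * (Rabs (l1 - u p) + Rabs (l2 - v p)) <= L * (2 * e)) by (apply Rmult_le_compat_l; lra).
    pose proof (Rabs_triang_inv (g l1 l2) (g (u p) (v p))). nra.
Qed.
End PMZ.


Lemma cont_integrand d1 d2 x1 x2 xa sa z : continuous (fun z => h_integrand d1 d2 x1 x2 xa sa z) z.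
Proof. apply (@ex_derive_continuous R_AbsRing R_NormedModule). unfold h_integrand. auto_derive. auto. Qed.

Lemma RInt_sym (F : R -> R) : (forall z, continuous F z) ->
  RInt (fun z => F (- z)) (-1) 1 = RInt F (-1) 1.
Proof.
  intros HF.
  assert (H := RInt_comp F (fun y => - y) (fun _ => -1) (-1) 1).
  cbv beta in H. replace (- (-1)) with 1 in H by ring. replace (- (1)) with (-1) in H by ring.
  assert (E : RInt (fun y : R => scal (-1) (F (- y))) (-1) 1 = RInt F 1 (-1)).
  { apply H.
    - intros; apply HF.
    - intros; split; [auto_derive; auto; ring | apply continuous_const]. }
  assert (Ex1 : ex_RInt F (-1) 1) by (apply (@ex_RInt_continuous R_CompleteNormedModule); intros; apply HF).
  assert (Ex2 : ex_RInt (fun z => F (- z)) (-1) 1).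
  { apply (@ex_RInt_continuous R_CompleteNormedModule); intros. apply continuous_comp; [|apply HF].
    apply (@ex_derive_continuous R_AbsRing R_NormedModule); auto_derive; auto. }
  rewrite <- (opp_RInt_swap F (-1) 1 Ex1) in E.
  replace (RInt (fun y : R => scal (-1) (F (- y))) (-1) 1)
    with (scal (-1) (RInt (fun y => F (- y)) (-1) 1)) in E.
  2: { rewrite (@RInt_scal R_CompleteNormedModule); auto. }
  unfold scal, opp in E; simpl in E; unfold mult in E; simpl in E. lra.
Qed.


Lemma pow_lip (a b M : R) (n : nat) : 1 <= M -> Rabs a <= M -> Rabs b <= M ->
  Rabs (a ^ n - b ^ n) <= INR n * M ^ n * Rabs (a - b).
Proof.
  intros HM Ha Hb. induction n as [|n IH].
  - simpl. rewrite Rminus_diag, Rabs_R0. lra.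
  - replace (a ^ S n - b ^ S n) with (a * (a ^ n - b ^ n) + b ^ n * (a - b)) by (simpl; ring).
    eapply Rle_trans; [apply Rabs_triang|]. rewrite !Rabs_mult, <- RPow_abs.
    assert (P1 : 0 <= M ^ n) by (apply pow_le; lra).
    assert (P2 : Rabs b ^ n <= M ^ n) by (apply pow_incr; split; [apply Rabs_pos|auto]).
    assert (P3 : M ^ n <= M ^ S n) by (simpl; nra).
    assert (0 <= Rabs (a - b)) by apply Rabs_pos.
    assert (0 <= Rabs (a ^ n - b ^ n)) by apply Rabs_pos.
    assert (0 <= Rabs a) by apply Rabs_pos.
    assert (0 <= INR n) by apply pos_INR.
    rewrite S_INR. simpl pow at 3.
    assert (Rabs a * Rabs (a ^ n - b ^ n) <= M * (INR n * M ^ n * Rabs (a - b))).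
    { apply Rmult_le_compat; auto. }
    assert (Rabs b ^ n * Rabs (a - b) <= M ^ n * Rabs (a - b)) by (apply Rmult_le_compat_r; auto).
    assert (M ^ n * Rabs (a - b) <= M * M ^ n * Rabs (a - b)) by (simpl in P3; nra).
    change (M ^ S n) with (M * M ^ n). lra.
Qed.

Lemma prod3 (u v w u' v' w' U V W : R) :
  Rabs u <= U -> Rabs u' <= U -> Rabs v <= V -> Rabs v' <= V -> Rabs w <= W -> Rabs w' <= W ->
  Rabs (u * v * w - u' * v' * w') <=
  Rabs (u - u') * V * W + U * Rabs (v - v') * W + U * V * Rabs (w - w').
Proof.
  intros Hu Hu' Hv Hv' Hw Hw'.
  replace (u * v * w - u' * v' * w') with ((u - u') * v * w + u' * (v - v') * w + u' * v' * (w - w')) by ring.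
  eapply Rle_trans; [apply Rabs_triang|].
  eapply Rle_trans; [apply Rplus_le_compat_r, Rabs_triang|].
  rewrite !Rabs_mult.
  pose proof (Rabs_pos (u - u')). pose proof (Rabs_pos (v - v')). pose proof (Rabs_pos (w - w')).
  pose proof (Rabs_pos v). pose proof (Rabs_pos w). pose proof (Rabs_pos u'). pose proof (Rabs_pos v').
  apply Rplus_le_compat; [apply Rplus_le_compat|].
  - apply Rmult_le_compat; try apply Rmult_le_pos; auto; try apply Rmult_le_compat; auto; lra.
  - apply Rmult_le_compat; try apply Rmult_le_pos; auto; try apply Rmult_le_compat; auto; lra.
  - apply Rmult_le_compat; try apply Rmult_le_pos; auto; try apply Rmult_le_compat; auto; lra.
Qed.

Definition LipK (d1 d2 : nat) (s : R) : R := 2 ^ d1 * 2 ^ d2 * (INR d1 + INR d2 + 2) * (Rabs s + 3).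

Lemma abs_le_1 x : -1 <= x <= 1 -> Rabs x <= 1.
Proof. intros; unfold Rabs; destruct Rcase_abs; lra. Qed.

Lemma prod_unit a b : -1 <= a <= 1 -> -1 <= b <= 1 -> -1 <= a * b <= 1.
Proof. intros; split; nra. Qed.
Lemma sq01 x : -1 <= x <= 1 -> 0 <= x ^ 2 <= 1.
Proof. intros; simpl; split; nra. Qed.
Lemma omsq01 x : -1 <= x <= 1 -> 0 <= 1 - x ^ 2 <= 1.
Proof. intros; simpl; split; nra. Qed.

Lemma lip_integrand d1 d2 s x1 x2 y1 y2 z :
  -1 <= x1 <= 1 -> -1 <= x2 <= 1 -> -1 <= y1 <= 1 -> -1 <= y2 <= 1 -> -1 <= z <= 1 ->
  Rabs (h_integrand d1 d2 x1 x2 x1 s z - h_integrand d1 d2 y1 y2 y1 s z)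
  <= LipK d1 d2 s * (Rabs (x1 - y1) + Rabs (x2 - y2)).
Proof.
  intros H1 H2 H3 H4 Hz. unfold h_integrand, LipK.
  assert (Az : Rabs z <= 1) by (apply abs_le_1; auto).
  assert (B1 : forall x, -1 <= x <= 1 -> Rabs (1 + x * z) <= 2).
  { intros x Hx. apply abs_le_1 in Hx. eapply Rle_trans; [apply Rabs_triang|].
    rewrite Rabs_R1, Rabs_mult. assert (Rabs x * Rabs z <= 1 * 1) by (apply Rmult_le_compat; auto; apply Rabs_pos). lra. }
  assert (P1 : forall x n, -1 <= x <= 1 -> Rabs ((1 + x * z) ^ n) <= 2 ^ n).
  { intros x n Hx. rewrite <- RPow_abs. apply pow_incr; split; [apply Rabs_pos|auto]. }
  assert (D : forall x y, Rabs ((1 + x * z) - (1 + y * z)) <= Rabs (x - y)).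
  { intros x y. replace ((1 + x * z) - (1 + y * z)) with ((x - y) * z) by ring.
    rewrite Rabs_mult. pose proof (Rabs_pos (x - y)). nra. }
  assert (W : forall x, -1 <= x <= 1 -> Rabs (x * (x * s - 1) * (1 - z ^ 2) + z * (1 - x ^ 2)) <= Rabs s + 3).
  { intros x Hx. replace (x * (x * s - 1) * (1 - z ^ 2) + z * (1 - x ^ 2))
      with (s * (x ^ 2 * (1 - z ^ 2)) - x * (1 - z ^ 2) + z * (1 - x ^ 2)) by ring.
    pose proof (sq01 x Hx). pose proof (omsq01 z Hz). pose proof (omsq01 x Hx).
    assert (Q1 : Rabs (x ^ 2 * (1 - z ^ 2)) <= 1) by (apply abs_le_1, prod_unit; lra).
    assert (Q2 : Rabs (x * (1 - z ^ 2)) <= 1) by (apply abs_le_1, prod_unit; lra).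
    assert (Q3 : Rabs (z * (1 - x ^ 2)) <= 1) by (apply abs_le_1, prod_unit; lra).
    unfold Rminus in *. eapply Rle_trans; [apply Rabs_triang|].
    eapply Rle_trans; [apply Rplus_le_compat_r, Rabs_triang|].
    rewrite Rabs_Ropp, Rabs_mult. pose proof (Rabs_pos s).
    assert (Rabs s * Rabs (x ^ 2 * (1 - z ^ 2)) <= Rabs s * 1) by (apply Rmult_le_compat_l; auto).
    unfold Rminus in *. lra. }
  assert (WD : Rabs ((x1 * (x1 * s - 1) * (1 - z ^ 2) + z * (1 - x1 ^ 2)) -
                     (y1 * (y1 * s - 1) * (1 - z ^ 2) + z * (1 - y1 ^ 2)))
               <= (2 * Rabs s + 3) * Rabs (x1 - y1)).
  { replace ((x1 * (x1 * s - 1) * (1 - z ^ 2) + z * (1 - x1 ^ 2)) -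
                     (y1 * (y1 * s - 1) * (1 - z ^ 2) + z * (1 - y1 ^ 2)))
      with ((x1 - y1) * (s * (x1 + y1) * (1 - z ^ 2) - (1 - z ^ 2) - z * (x1 + y1))) by ring.
    rewrite Rabs_mult, Rmult_comm. apply Rmult_le_compat_r; [apply Rabs_pos|].
    assert (Q1 : Rabs ((x1 + y1) * (1 - z ^ 2)) <= 2).
    { rewrite Rabs_mult. assert (Rabs (x1 + y1) <= 2) by (unfold Rabs; destruct Rcase_abs; lra).
      assert (Rabs (1 - z ^ 2) <= 1) by (apply abs_le_1; pose proof (omsq01 z Hz); lra).
      pose proof (Rabs_pos (1 - z^2)). nra. }
    assert (Q2 : Rabs (1 - z ^ 2) <= 1) by (apply abs_le_1; pose proof (omsq01 z Hz); lra).
    assert (Q3 : Rabs (z * (x1 + y1)) <= 2) by (rewrite Rabs_mult; assert (Rabs (x1 + y1) <= 2) by (unfold Rabs; destruct Rcase_abs; lra); pose proof (Rabs_pos z); pose proof (Rabs_pos (x1+y1)); nra).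
    replace (s * (x1 + y1) * (1 - z ^ 2)) with (s * ((x1 + y1) * (1 - z ^ 2))) by ring.
    unfold Rminus in *. eapply Rle_trans; [apply Rabs_triang|].
    eapply Rle_trans; [apply Rplus_le_compat_r, Rabs_triang|].
    rewrite !Rabs_Ropp, Rabs_mult. pose proof (Rabs_pos s).
    assert (Rabs s * Rabs ((x1 + y1) * (1 - z ^ 2)) <= Rabs s * 2) by (apply Rmult_le_compat_l; auto).
    unfold Rminus in *. lra. }
  eapply Rle_trans.
  { apply prod3; [apply P1|apply P1|apply P1|apply P1|apply W|apply W]; auto. }
  assert (L1 : Rabs ((1 + x1 * z) ^ d1 - (1 + y1 * z) ^ d1) <= INR d1 * 2 ^ d1 * Rabs (x1 - y1)).
  { apply (Rle_trans _ _ _ (pow_lip _ _ 2 d1 ltac:(lra) (B1 x1 H1) (B1 y1 H3))).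
    apply Rmult_le_compat_l; [|apply D].
    apply Rmult_le_pos; [apply pos_INR|apply pow_le; lra]. }
  assert (L2 : Rabs ((1 + x2 * z) ^ d2 - (1 + y2 * z) ^ d2) <= INR d2 * 2 ^ d2 * Rabs (x2 - y2)).
  { apply (Rle_trans _ _ _ (pow_lip _ _ 2 d2 ltac:(lra) (B1 x2 H2) (B1 y2 H4))).
    apply Rmult_le_compat_l; [|apply D].
    apply Rmult_le_pos; [apply pos_INR|apply pow_le; lra]. }
  assert (0 < 2 ^ d1) by (apply pow_lt; lra). assert (0 < 2 ^ d2) by (apply pow_lt; lra).
  pose proof (pos_INR d1). pose proof (pos_INR d2). pose proof (Rabs_pos s).
  pose proof (Rabs_pos (x1 - y1)). pose proof (Rabs_pos (x2 - y2)).
  set (p1 := 2 ^ d1) in *. set (p2 := 2 ^ d2) in *. set (S := Rabs s) in *.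
  set (e1 := Rabs (x1 - y1)) in *. set (e2 := Rabs (x2 - y2)) in *.
  set (n1 := INR d1) in *. set (n2 := INR d2) in *.
  assert (Rabs ((1 + x1 * z) ^ d1 - (1 + y1 * z) ^ d1) * p2 * (S + 3) <= n1 * p1 * e1 * p2 * (S + 3)).
  { apply Rmult_le_compat_r; [lra|]. apply Rmult_le_compat_r; [lra|auto]. }
  assert (p1 * Rabs ((1 + x2 * z) ^ d2 - (1 + y2 * z) ^ d2) * (S + 3) <= p1 * (n2 * p2 * e2) * (S + 3)).
  { apply Rmult_le_compat_r; [lra|]. apply Rmult_le_compat_l; [lra|auto]. }
  assert (p1 * p2 * Rabs ((x1 * (x1 * s - 1) * (1 - z ^ 2) + z * (1 - x1 ^ 2)) -
                     (y1 * (y1 * s - 1) * (1 - z ^ 2) + z * (1 - y1 ^ 2))) <= p1 * p2 * ((2 * S + 3) * e1)).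
  { apply Rmult_le_compat_l; [nra|auto]. }
  assert (0 <= p1 * p2) by nra.
  assert (0 <= p1 * p2 * e1) by nra. assert (0 <= p1 * p2 * e2) by nra.
  assert (0 <= p1 * p2 * e1 * (n2 * (S + 3) + 3)) by (apply Rmult_le_pos; nra).
  assert (0 <= p1 * p2 * e2 * ((n1 + 2) * (S + 3))) by (apply Rmult_le_pos; nra).
  lra.
Qed.


Ltac exR := apply (@ex_RInt_continuous R_CompleteNormedModule); intros;
  apply (@ex_derive_continuous R_AbsRing R_NormedModule); auto_derive; auto.

Lemma RInt_minus_R (f g : R -> R) a b : ex_RInt f a b -> ex_RInt g a b ->
  RInt (fun x => f x - g x) a b = RInt f a b - RInt g a b.
Proof. intros; apply (@RInt_minus R_CompleteNormedModule); auto. Qed.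
Lemma RInt_plus_R (f g : R -> R) a b : ex_RInt f a b -> ex_RInt g a b ->
  RInt (fun x => f x + g x) a b = RInt f a b + RInt g a b.
Proof. intros; apply (@RInt_plus R_CompleteNormedModule); auto. Qed.
Lemma RInt_scal_R (f : R -> R) k a b : ex_RInt f a b ->
  RInt (fun x => k * f x) a b = k * RInt f a b.
Proof. intros; apply (@RInt_scal R_CompleteNormedModule); auto. Qed.
Lemma RInt_opp_R (f : R -> R) a b : ex_RInt f a b ->
  RInt (fun x => - f x) a b = - RInt f a b.
Proof. intros; apply (@RInt_opp R_CompleteNormedModule); auto. Qed.

Lemma ex_h d1 d2 x1 x2 xa sa : ex_RInt (fun z => h_integrand d1 d2 x1 x2 xa sa z) (-1) 1.
Proof. unfold h_integrand; exR. Qed.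

Lemma lip_h1 d1 d2 s x1 x2 y1 y2 :
  -1 <= x1 <= 1 -> -1 <= x2 <= 1 -> -1 <= y1 <= 1 -> -1 <= y2 <= 1 ->
  Rabs (h1 d1 d2 s x1 x2 - h1 d1 d2 s y1 y2) <= 2 * LipK d1 d2 s * (Rabs (x1 - y1) + Rabs (x2 - y2)).
Proof.
  intros. unfold h1. rewrite <- RInt_minus_R by apply ex_h.
  replace (2 * LipK d1 d2 s * (Rabs (x1 - y1) + Rabs (x2 - y2)))
    with ((1 - -1) * (LipK d1 d2 s * (Rabs (x1 - y1) + Rabs (x2 - y2)))) by ring.
  apply abs_RInt_le_const; [lra| |].
  - apply (@ex_RInt_minus R_CompleteNormedModule); apply ex_h.
  - intros; apply lip_integrand; auto.
Qed.

Lemma h2_sym d1 d2 s x1 x2 : h2 d1 d2 s x1 x2 = - h1 d2 d1 (- s) (- x2) (- x1).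
Proof.
  unfold h1, h2. rewrite <- (RInt_sym (fun z => h_integrand d2 d1 (- x2) (- x1) (- x2) (- s) z)) by (intros; apply cont_integrand).
  rewrite <- RInt_opp_R.
  2: { apply (@ex_RInt_continuous R_CompleteNormedModule); intros.
       apply (@ex_derive_continuous R_AbsRing R_NormedModule); unfold h_integrand; auto_derive; auto. }
  apply RInt_ext; intros z _. unfold h_integrand.
  replace (1 + - x2 * - z) with (1 + x2 * z) by ring.
  replace (1 + - x1 * - z) with (1 + x1 * z) by ring. match goal with |- ?a = ?b => change (@eq R a b) end. ring.
Qed.

Lemma lip_h2 d1 d2 s x1 x2 y1 y2 :
  -1 <= x1 <= 1 -> -1 <= x2 <= 1 -> -1 <= y1 <= 1 -> -1 <= y2 <= 1 ->
  Rabs (h2 d1 d2 s x1 x2 - h2 d1 d2 s y1 y2) <= 2 * LipK d2 d1 (- s) * (Rabs (x1 - y1) + Rabs (x2 - y2)).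
Proof.
  intros. rewrite !h2_sym.
  replace (- h1 d2 d1 (- s) (- x2) (- x1) - - h1 d2 d1 (- s) (- y2) (- y1))
    with (- (h1 d2 d1 (- s) (- x2) (- x1) - h1 d2 d1 (- s) (- y2) (- y1))) by ring.
  rewrite Rabs_Ropp.
  eapply Rle_trans; [apply lip_h1; lra|].
  replace (- x2 - - y2) with (- (x2 - y2)) by ring.
  replace (- x1 - - y1) with (- (x1 - y1)) by ring.
  rewrite !Rabs_Ropp. lra.
Qed.


Lemma pos1 d1 d2 s x2 : 1 < s -> -1 <= x2 <= 0 -> 0 < h1 d1 d2 s 1 x2.
Proof.
  intros Hs Hx. unfold h1. apply RInt_gt_0; [lra| |intros; apply cont_integrand].
  intros z Hz. unfold h_integrand.
  assert (0 < 1 + 1 * z) by lra. assert (0 < 1 + x2 * z) by nra.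
  assert (0 < (1 + 1 * z) ^ d1) by (apply pow_lt; auto).
  assert (0 < (1 + x2 * z) ^ d2) by (apply pow_lt; auto).
  assert (0 < 1 * (1 * s - 1) * (1 - z ^ 2) + z * (1 - 1 ^ 2)).
  { replace (1 * (1 * s - 1) * (1 - z ^ 2) + z * (1 - 1 ^ 2)) with ((s - 1) * (1 - z * z)) by ring.
    apply Rmult_lt_0_compat; nra. }
  apply Rmult_lt_0_compat; auto. apply Rmult_lt_0_compat; auto.
Qed.

Lemma neg2 d1 d2 s x1 : s < -1 -> 0 <= x1 <= 1 -> h2 d1 d2 s x1 (-1) < 0.
Proof.
  intros Hs Hx. rewrite h2_sym. replace (- -1) with 1 by ring.
  pose proof (pos1 d2 d1 (- s) (- x1) ltac:(lra) ltac:(lra)). lra.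
Qed.

Lemma INR_le_4pow n : INR n <= 4 ^ n.
Proof.
  induction n as [|n IH]; [simpl; lra|].
  rewrite S_INR. change (4 ^ S n) with (4 * 4 ^ n). assert (1 <= 4 ^ n) by (apply pow_R1_Rle; lra). lra.
Qed.

Lemma binom_rem (u : R) (n : nat) : Rabs u <= 1 ->
  Rabs ((1 + u) ^ n - 1 - INR n * u) <= 4 ^ n * u ^ 2.
Proof.
  intros Hu. induction n as [|n IH].
  - simpl. replace (1 - 1 - 0 * u) with 0 by ring. rewrite Rabs_R0. nra.
  - replace ((1 + u) ^ S n - 1 - INR (S n) * u)
      with ((1 + u) * ((1 + u) ^ n - 1 - INR n * u) + INR n * u ^ 2) by (rewrite S_INR; simpl; ring).
    eapply Rle_trans; [apply Rabs_triang|]. rewrite !Rabs_mult.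
    assert (Rabs (1 + u) <= 2) by (eapply Rle_trans; [apply Rabs_triang|]; rewrite Rabs_R1; lra).
    pose proof (Rabs_pos ((1 + u) ^ n - 1 - INR n * u)). pose proof (Rabs_pos (1 + u)).
    assert (Rabs (1 + u) * Rabs ((1 + u) ^ n - 1 - INR n * u) <= 2 * (4 ^ n * u ^ 2)) by
      (apply Rmult_le_compat; auto).
    rewrite (Rabs_right (INR n)) by (apply Rle_ge, pos_INR).
    rewrite (Rabs_right (u ^ 2)) by (apply Rle_ge; simpl; nra).
    pose proof (INR_le_4pow n). assert (0 <= u ^ 2) by (simpl; nra).
    assert (INR n * u ^ 2 <= 4 ^ n * u ^ 2) by (apply Rmult_le_compat_r; auto).
    assert (0 <= 4 ^ n * u ^ 2) by (apply Rmult_le_pos; auto; apply pow_le; lra).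
    simpl pow at 3. lra.
Qed.

Lemma DE (v : R) (n : nat) : 0 <= v <= 1 ->
  2 * INR n * v <= (1 + v) ^ n - (1 - v) ^ n /\ 2 <= (1 + v) ^ n + (1 - v) ^ n.
Proof.
  intros Hv. induction n as [|n [IH1 IH2]]; [simpl; lra|].
  rewrite S_INR. change ((1 + v) ^ S n) with ((1 + v) * (1 + v) ^ n).
  change ((1 - v) ^ S n) with ((1 - v) * (1 - v) ^ n).
  assert (0 <= (1 - v) ^ n) by (apply pow_le; lra).
  assert (0 <= (1 + v) ^ n) by (apply pow_le; lra).
  assert (v * 2 <= v * ((1 + v) ^ n + (1 - v) ^ n)) by (apply Rmult_le_compat_l; lra).
  assert (0 <= v * (2 * INR n * v)) by (apply Rmult_le_pos; [lra|]; pose proof (pos_INR n); nra).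
  assert (v * (2 * INR n * v) <= v * ((1 + v) ^ n - (1 - v) ^ n)) by (apply Rmult_le_compat_l; lra).
  split; lra.
Qed.

Lemma sym_pt (x2 z : R) (n : nat) : -1 <= x2 <= 0 -> -1 <= z <= 1 ->
  (1 + x2 * z) ^ n * z + (1 + x2 * - z) ^ n * - z <= 2 * INR n * x2 * z ^ 2.
Proof.
  intros Hx Hz. destruct (Rle_lt_dec 0 z) as [Hz0|Hz0].
  - destruct (DE (- x2 * z) n) as [D _]; [nra|].
    replace (1 + - x2 * z) with (1 + x2 * - z) in D by ring.
    replace (1 - - x2 * z) with (1 + x2 * z) in D by ring.
    simpl. nra.
  - destruct (DE (x2 * z) n) as [D _]; [nra|].
    replace (1 - x2 * z) with (1 + x2 * - z) in D by ring.
    simpl. nra.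
Qed.

Lemma RInt_z2 : RInt (fun z => z ^ 2) (-1) 1 = 2 / 3.
Proof.
  apply is_RInt_unique.
  replace (2 / 3) with (1 ^ 3 / 3 - (-1) ^ 3 / 3) by (simpl; field).
  apply (is_RInt_derive (fun z => z ^ 3 / 3)).
  - intros. auto_derive; auto. simpl; field.
  - intros. apply (@ex_derive_continuous R_AbsRing R_NormedModule); auto_derive; auto.
Qed.

Lemma RInt_one : RInt (fun z => 1) (-1) 1 = 2.
Proof.
  rewrite RInt_const. unfold scal; simpl; unfold mult; simpl. ring.
Qed.

Lemma sym_int (x2 : R) (n : nat) : -1 <= x2 <= 0 ->
  RInt (fun z => (1 + x2 * z) ^ n * z) (-1) 1 <= 2 * INR n * x2 / 3.
Proof.
  intros Hx.
  set (F := fun z => (1 + x2 * z) ^ n * z).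
  assert (HF : forall z, continuous F z) by
    (intros; apply (@ex_derive_continuous R_AbsRing R_NormedModule); unfold F; auto_derive; auto).
  assert (E : RInt F (-1) 1 = / 2 * RInt (fun z => F z + F (- z)) (-1) 1).
  { rewrite RInt_plus_R, RInt_sym; auto; [assert (Hr : forall r : R, r = / 2 * (r + r)) by (intros; field); apply Hr| |].
    - apply (@ex_RInt_continuous R_CompleteNormedModule); intros; apply HF.
    - unfold F. exR. }
  rewrite E.
  assert (RInt (fun z => F z + F (- z)) (-1) 1 <= RInt (fun z => 2 * INR n * x2 * z ^ 2) (-1) 1).
  { apply RInt_le; [lra| unfold F; exR | exR |]. intros z Hz. unfold F. apply sym_pt; lra. }
  rewrite RInt_scal_R in H by exR. rewrite RInt_z2 in H. lra.
Qed.


Definition KK (d1 d2 : nat) (s : R) : R :=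
  Rabs s * 2 ^ d1 * 2 ^ d2 + 2 ^ d2 * (2 * 4 ^ (S d1) + INR d1 + 1) + INR d2 * 2 ^ d2 * (INR d1 + 1).

Lemma KK_pos d1 d2 s : 0 <= KK d1 d2 s.
Proof.
  unfold KK. pose proof (Rabs_pos s). pose proof (pos_INR d1). pose proof (pos_INR d2).
  assert (0 < 2 ^ d1) by (apply pow_lt; lra). assert (0 < 2 ^ d2) by (apply pow_lt; lra).
  assert (0 < 4 ^ S d1) by (apply pow_lt; lra).
  assert (0 <= Rabs s * 2 ^ d1 * 2 ^ d2) by (apply Rmult_le_pos; nra).
  assert (0 <= 2 ^ d2 * (2 * 4 ^ (S d1) + INR d1 + 1)) by (apply Rmult_le_pos; nra).
  assert (0 <= INR d2 * 2 ^ d2 * (INR d1 + 1)) by (apply Rmult_le_pos; nra).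
  lra.
Qed.

Lemma pt_bound d1 d2 s x1 x2 z : 0 <= x1 <= 1 -> -1 <= x2 <= 0 -> -1 <= z <= 1 ->
  h_integrand d1 d2 x1 x2 x1 s z <=
  (1 + x2 * z) ^ d2 * z + x1 * ((INR d1 + 1) * z ^ 2 - 1) + KK d1 d2 s * x1 * (x1 - x2).
Proof.
  intros Hx1 Hx2 Hz. unfold h_integrand.
  set (A := 1 + x1 * z). set (B := 1 + x2 * z).
  set (a := A ^ d1). set (bb := B ^ d2). set (n := INR d1 + 1).
  set (r := A * a - 1 - n * x1 * z).
  assert (Er : r = A ^ (S d1) - 1 - INR (S d1) * (x1 * z)) by (unfold r, a, n; rewrite S_INR; simpl; ring).
  assert (Hr : Rabs r <= 4 ^ S d1 * x1 ^ 2).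
  { rewrite Er. eapply Rle_trans; [apply binom_rem; apply abs_le_1, prod_unit; lra|].
    apply Rmult_le_compat_l; [apply pow_le; lra|]. simpl. assert (0 <= x1 * x1 * (1 - z * z)) by (apply Rmult_le_pos; nra). nra. }
  set (T1 := s * x1 ^ 2 * a * bb * (1 - z ^ 2)).
  set (T2 := bb * (r * (z - x1) - n * x1 ^ 2 * z)).
  set (T3 := (bb - 1) * x1 * (n * z ^ 2 - 1)).
  assert (Eq : a * bb * (x1 * (x1 * s - 1) * (1 - z ^ 2) + z * (1 - x1 ^ 2))
     - (bb * z + x1 * (n * z ^ 2 - 1)) = T1 + T2 + T3).
  { unfold T1, T2, T3. unfold r. unfold A. ring. }
  assert (Ha : Rabs a <= 2 ^ d1).
  { unfold a. rewrite <- RPow_abs. apply pow_incr; split; [apply Rabs_pos|].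
    unfold A; eapply Rle_trans; [apply Rabs_triang|]. rewrite Rabs_R1. assert (Rabs (x1 * z) <= 1) by (apply abs_le_1, prod_unit; lra). lra. }
  assert (Hb : Rabs bb <= 2 ^ d2).
  { unfold bb. rewrite <- RPow_abs. apply pow_incr; split; [apply Rabs_pos|].
    unfold B; eapply Rle_trans; [apply Rabs_triang|]. rewrite Rabs_R1. assert (Rabs (x2 * z) <= 1) by (apply abs_le_1, prod_unit; lra). lra. }
  assert (Hb1 : Rabs (bb - 1) <= INR d2 * 2 ^ d2 * (- x2)).
  { replace (bb - 1) with (B ^ d2 - 1 ^ d2) by (unfold bb; rewrite pow1; ring).
    eapply Rle_trans; [apply (pow_lip _ _ 2); try lra|].
    - unfold B; eapply Rle_trans; [apply Rabs_triang|]. rewrite Rabs_R1. assert (Rabs (x2 * z) <= 1) by (apply abs_le_1, prod_unit; lra). lra.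
    - rewrite Rabs_R1; lra.
    - apply Rmult_le_compat_l; [apply Rmult_le_pos; [apply pos_INR|apply pow_le; lra]|].
      unfold B. replace (1 + x2 * z - 1) with (x2 * z) by ring. apply abs_le_1 in Hz.
      rewrite Rabs_mult, (Rabs_left1 x2) by lra. pose proof (Rabs_pos z). nra. }
  assert (Hs1 : Rabs (x1 ^ 2 * (1 - z ^ 2)) <= x1 ^ 2).
  { rewrite Rabs_mult, (Rabs_right (x1 ^ 2)) by (apply Rle_ge; simpl; nra).
    assert (Rabs (1 - z ^ 2) <= 1) by (apply abs_le_1; pose proof (omsq01 z Hz); lra).
    assert (0 <= x1 ^ 2) by (simpl; nra). nra. }
  assert (H1 : Rabs T1 <= Rabs s * 2 ^ d1 * 2 ^ d2 * x1 ^ 2).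
  { unfold T1. replace (s * x1 ^ 2 * a * bb * (1 - z ^ 2)) with (s * a * bb * (x1 ^ 2 * (1 - z ^ 2))) by ring.
    set (q := x1 ^ 2 * (1 - z ^ 2)) in *.
    rewrite !Rabs_mult. pose proof (Rabs_pos s). pose proof (Rabs_pos a). pose proof (Rabs_pos bb).
    pose proof (Rabs_pos q).
    apply Rmult_le_compat; auto; [apply Rmult_le_pos; auto; apply Rmult_le_pos; auto|].
    apply Rmult_le_compat; auto; [apply Rmult_le_pos; auto|].
    apply Rmult_le_compat_l; auto. }
  assert (H2 : Rabs T2 <= 2 ^ d2 * (2 * 4 ^ (S d1) + INR d1 + 1) * x1 ^ 2).
  { unfold T2. rewrite Rabs_mult.
    assert (Rabs (r * (z - x1) - n * x1 ^ 2 * z) <= (2 * 4 ^ (S d1) + INR d1 + 1) * x1 ^ 2).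
    { unfold Rminus at 1. eapply Rle_trans; [apply Rabs_triang|]. rewrite Rabs_Ropp, !Rabs_mult.
      assert (Rabs (z - x1) <= 2) by (unfold Rabs; destruct Rcase_abs; lra).
      pose proof (Rabs_pos r). pose proof (Rabs_pos (z - x1)).
      assert (Rabs r * Rabs (z - x1) <= 4 ^ S d1 * x1 ^ 2 * 2) by (apply Rmult_le_compat; auto).
      unfold n. rewrite (Rabs_right (INR d1 + 1)) by (apply Rle_ge; pose proof (pos_INR d1); lra).
      rewrite (Rabs_right (x1 ^ 2)) by (apply Rle_ge; simpl; nra).
      apply abs_le_1 in Hz. pose proof (Rabs_pos z). pose proof (pos_INR d1).
      assert (0 <= x1 ^ 2) by (simpl; nra).
      assert ((INR d1 + 1) * x1 ^ 2 * Rabs z <= (INR d1 + 1) * x1 ^ 2 * 1) by (apply Rmult_le_compat_l; nra).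
      lra. }
    pose proof (Rabs_pos bb). pose proof (Rabs_pos (r * (z - x1) - n * x1 ^ 2 * z)).
    replace (2 ^ d2 * (2 * 4 ^ (S d1) + INR d1 + 1) * x1 ^ 2) with (2 ^ d2 * ((2 * 4 ^ (S d1) + INR d1 + 1) * x1 ^ 2)) by ring. apply Rmult_le_compat; auto. }
  assert (H3 : Rabs T3 <= INR d2 * 2 ^ d2 * (INR d1 + 1) * (x1 * - x2)).
  { unfold T3. rewrite !Rabs_mult. rewrite (Rabs_right x1) by lra.
    assert (Rabs (n * z ^ 2 - 1) <= INR d1 + 1).
    { unfold n. pose proof (pos_INR d1). pose proof (sq01 z Hz). apply Rabs_le. split; nra. }
    pose proof (Rabs_pos (bb - 1)). pose proof (Rabs_pos (n * z ^ 2 - 1)).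
    replace (INR d2 * 2 ^ d2 * (INR d1 + 1) * (x1 * - x2)) with (INR d2 * 2 ^ d2 * (- x2) * x1 * (INR d1 + 1)) by ring.
    apply Rmult_le_compat; try apply Rmult_le_pos; auto; try lra.
    apply Rmult_le_compat; auto; lra. }
  assert (T1 + T2 + T3 <= KK d1 d2 s * x1 * (x1 - x2)).
  { unfold KK. pose proof (Rle_abs T1). pose proof (Rle_abs T2). pose proof (Rle_abs T3).
    replace (x1 ^ 2) with (x1 * x1) in H1, H2 by ring.
    assert (0 <= x1 * - x2) by nra.
    assert (0 <= Rabs s * 2 ^ d1 * 2 ^ d2 * (x1 * - x2)).
    { apply Rmult_le_pos; auto. pose proof (Rabs_pos s). assert (0 < 2 ^ d1) by (apply pow_lt; lra).
      assert (0 < 2 ^ d2) by (apply pow_lt; lra). apply Rmult_le_pos; [apply Rmult_le_pos|]; lra. }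
    assert (0 <= 2 ^ d2 * (2 * 4 ^ S d1 + INR d1 + 1) * (x1 * - x2)).
    { apply Rmult_le_pos; auto. assert (0 < 2 ^ d2) by (apply pow_lt; lra).
      assert (0 < 4 ^ S d1) by (apply pow_lt; lra). pose proof (pos_INR d1). apply Rmult_le_pos; lra. }
    assert (0 <= INR d2 * 2 ^ d2 * (INR d1 + 1) * (x1 * x1)).
    { apply Rmult_le_pos; [|nra]. assert (0 < 2 ^ d2) by (apply pow_lt; lra).
      pose proof (pos_INR d1). pose proof (pos_INR d2). apply Rmult_le_pos; [apply Rmult_le_pos|]; lra. }
    lra. }
  lra.
Qed.

Lemma L1bound d1 d2 s x1 x2 : 0 <= x1 <= 1 -> -1 <= x2 <= 0 ->
  h1 d1 d2 s x1 x2 <= 2 * INR d2 * x2 / 3 + 2 * (INR d1 - 2) * x1 / 3 + 2 * KK d1 d2 s * x1 * (x1 - x2).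
Proof.
  intros Hx1 Hx2. unfold h1.
  eapply Rle_trans.
  { apply RInt_le; [lra|apply ex_h| |].
    2: { intros z Hz. apply pt_bound; lra. }
    exR. }
  rewrite RInt_plus_R by exR. rewrite RInt_plus_R by exR.
  rewrite RInt_scal_R by exR.
  rewrite RInt_minus_R by exR. rewrite RInt_scal_R by exR. rewrite RInt_z2, RInt_one.
  rewrite RInt_const. unfold scal; simpl; unfold mult; simpl.
  pose proof (sym_int x2 d2 Hx2). lra.
Qed.


Lemma LipK_pos d1 d2 s : 0 <= LipK d1 d2 s.
Proof.
  unfold LipK. pose proof (Rabs_pos s). pose proof (pos_INR d1). pose proof (pos_INR d2).
  assert (0 < 2 ^ d1) by (apply pow_lt; lra). assert (0 < 2 ^ d2) by (apply pow_lt; lra).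
  apply Rmult_le_pos; [|lra]. apply Rmult_le_pos; [|lra]. nra.
Qed.

Lemma L2bound d1 d2 s x1 x2 : 0 <= x1 <= 1 -> -1 <= x2 <= 0 ->
  2 * INR d1 * x1 / 3 + 2 * (INR d2 - 2) * x2 / 3 - 2 * KK d2 d1 (- s) * (- x2) * (x1 - x2)
  <= h2 d1 d2 s x1 x2.
Proof.
  intros. rewrite h2_sym.
  pose proof (L1bound d2 d1 (- s) (- x2) (- x1) ltac:(lra) ltac:(lra)). lra.
Qed.

Lemma lemma3p5 (d1 d2 : nat) (s1 s2 : R) :
  (1 <= d1)%nat -> (1 <= d2)%nat -> 1 < s1 -> s2 < -1 ->
  exists x1 x2 : R, 0 < x1 < 1 /\ -1 < x2 < 0 /\
    h1 d1 d2 s1 x1 x2 = 0 /\ h2 d1 d2 s2 x1 x2 = 0.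
Proof.
  intros Hd1 Hd2 Hs1 Hs2.
  set (n1 := INR d1). set (n2 := INR d2).
  assert (N1 : 1 <= n1) by (unfold n1; apply (le_INR 1); lia).
  assert (N2 : 1 <= n2) by (unfold n2; apply (le_INR 1); lia).
  set (K1 := KK d1 d2 s1). set (K2 := KK d2 d1 (- s2)).
  assert (HK1 : 0 <= K1) by apply KK_pos. assert (HK2 : 0 <= K2) by apply KK_pos.
  set (D := n1 + n2). set (C := 2 * (K1 + K2) + 1).
  assert (HD : 2 <= D) by (unfold D; lra).
  set (e := / (2 * (C + 1) * D)).
  assert (He : 0 < e) by (unfold e; apply Rinv_0_lt_compat; unfold C, D; nra).
  assert (HeD : e * D = / (2 * (C + 1))) by (unfold e; field; unfold C, D; lra).
  assert (HeD1 : e * D <= 1 / 2).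
  { rewrite HeD. unfold C. apply (Rmult_le_reg_l (2 * (2 * (K1 + K2) + 1 + 1))); [lra|].
    rewrite Rinv_r by lra. lra. }
  assert (HCe : C * (e * D) <= 1 / 2).
  { rewrite HeD. unfold C. apply (Rmult_le_reg_l (2 * (2 * (K1 + K2) + 1 + 1))); [lra|].
    field_simplify; lra. }
  assert (HK1e : 2 * K1 * e * D <= 1 / 2).
  { assert (2 * K1 * (e * D) <= C * (e * D)) by (apply Rmult_le_compat_r; [nra|unfold C; lra]). lra. }
  assert (HK2e : 2 * K2 * e * D <= 1 / 2).
  { assert (2 * K2 * (e * D) <= C * (e * D)) by (apply Rmult_le_compat_r; [nra|unfold C; lra]). lra. }
  assert (P1 : 0 <= n1 * e) by nra. assert (P2 : 0 <= n2 * e) by nra.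
  assert (E1 : n1 * e <= 1 / 2) by (unfold D in HeD1; lra).
  assert (E2 : n2 * e <= 1 / 2) by (unfold D in HeD1; lra).
  assert (Q1 : 2 * K1 * e <= 2 * K1 * e * D).
  { unfold D. assert (0 <= 2 * K1 * e) by nra. assert (0 <= 2 * K1 * e * (n1 + n2 - 1)) by (apply Rmult_le_pos; lra). lra. }
  assert (Q2 : 2 * K2 * e <= 2 * K2 * e * D).
  { unfold D. assert (0 <= 2 * K2 * e) by nra. assert (0 <= 2 * K2 * e * (n1 + n2 - 1)) by (apply Rmult_le_pos; lra). lra. }
  assert (HKe1 : 2 * K1 * e <= 1 / 2) by lra.
  assert (HKe2 : 2 * K2 * e <= 1 / 2) by lra.
  set (L := 2 * LipK d1 d2 s1 + 2 * LipK d2 d1 (- s2)).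
  assert (HL : 0 <= L) by (unfold L; pose proof (LipK_pos d1 d2 s1); pose proof (LipK_pos d2 d1 (- s2)); lra).
  destruct (PM_zero (h1 d1 d2 s1) (h2 d1 d2 s2) (n2 * e) 1 (-1) (- (n1 * e)) L)
    as [x [y [[Bx By] [Z1 Z2]]]].
  - nra.
  - nra.
  - auto.
  - intros x y x' y' [Hx Hy] [Hx' Hy'].
    eapply Rle_trans; [apply lip_h1; nra|].
    apply Rmult_le_compat_r; [pose proof (Rabs_pos (x - x')); pose proof (Rabs_pos (y - y')); lra|].
    unfold L; pose proof (LipK_pos d2 d1 (- s2)); lra.
  - intros x y x' y' [Hx Hy] [Hx' Hy'].
    eapply Rle_trans; [apply lip_h2; nra|].
    apply Rmult_le_compat_r; [pose proof (Rabs_pos (x - x')); pose proof (Rabs_pos (y - y')); lra|].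
    unfold L; pose proof (LipK_pos d1 d2 s1); lra.
  -
    intros y Hy.
    eapply Rle_lt_trans; [apply L1bound; nra|].
    fold n1 n2 K1.
    assert (Ht : n1 * e <= - y) by lra.
    assert (A1 : 0 <= (- y - n1 * e) * (2 / 3 - 2 * K1 * e)) by (apply Rmult_le_pos; lra).
    assert (A2 : 2 * K1 * e * e * D <= e * (1 / 2)) by nra.
    unfold D in A2.
    assert (A3 : 0 < n2 * e) by nra.
    clear - A1 A2 A3 Ht HKe1 N1 N2 He HK1.
    replace (2 * n2 * y / 3 + 2 * (n1 - 2) * (n2 * e) / 3 + 2 * K1 * (n2 * e) * (n2 * e - y))
      with (n2 * ((2 * K1 * e * e * (n1 + n2) - 4 / 3 * e) - (- y - n1 * e) * (2 / 3 - 2 * K1 * e)))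
      by field.
    assert (2 * K1 * e * e * (n1 + n2) - 4 / 3 * e - (- y - n1 * e) * (2 / 3 - 2 * K1 * e) < 0) by nra.
    nra.
  - intros y Hy. apply Rlt_le, pos1; [auto|nra].
  - intros x Hx. apply neg2; [auto|nra].
  -
    intros x Hx.
    eapply Rle_trans; [|apply L2bound; nra].
    fold n1 n2 K2.
    assert (A1 : 0 <= (x - n2 * e) * (2 / 3 - 2 * K2 * e)) by (apply Rmult_le_pos; lra).
    assert (A2 : 2 * K2 * e * e * D <= e * (1 / 2)) by nra.
    unfold D in A2.
    replace (2 * n1 * x / 3 + 2 * (n2 - 2) * - (n1 * e) / 3 - 2 * K2 * - - (n1 * e) * (x - - (n1 * e)))
      with (n1 * ((4 / 3 * e - 2 * K2 * e * e * (n1 + n2)) + (x - n2 * e) * (2 / 3 - 2 * K2 * e)))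
      by field.
    apply Rmult_le_pos; [lra|]. nra.
  - exists x, y. refine (conj (conj _ _) (conj (conj _ _) (conj Z1 Z2))).
    + nra.
    + destruct (Rle_lt_or_eq_dec x 1 (proj2 Bx)) as [?|Ex]; [lra|]. subst x.
      pose proof (pos1 d1 d2 s1 y Hs1 ltac:(nra)). lra.
    + destruct (Rle_lt_or_eq_dec (-1) y (proj1 By)) as [?|Ey]; [lra|]. subst y.
      pose proof (neg2 d1 d2 s2 x Hs2 ltac:(nra)). lra.
    + nra.
Qed.
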